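(* Let $A=[a_{ij}]\in M_{m,n}(\mathbb{R})$ have rank $r>1$ and be diagonally eliminable up to $r$, and let $0\leq k<r$. Then the Gauss-Jordan operation matrix $\mathcal{G}_{2k+1}=[g^{(2k+1)}_{ij}]_{m\times m}$ satisfies $g^{(2k+1)}_{ij}=0$ for $i\neq j$, $g^{(2k+1)}_{ii}=1$ for $i\neq k+1$, and $g^{(2k+1)}_{k+1,k+1}=\dfrac{m_k}{m_{k+1}}$; and $\mathcal{G}_{2k+2}=[g^{(2k+2)}_{ij}]_{m\times m}$ satisfies $$g^{(2k+2)}_{ij}=\begin{cases}0 & \text{if } j\notin\{i,k+1\},\\ 1 & \text{if } i=j,\\ (-1)^{k+i+1}\dfrac{m^{1\dots k}_{1\dots i-1,\,i+1\dots k+1}}{m_k} & \text{if } 1\leq i\leq k,\ j=k+1,\\[2mm] -\dfrac{m^{1\dots k\,i}_{1\dots k\,k+1}}{m_k} & \text{if } k+1<i\leq m,\ j=k+1.\end{cases}$$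
   Context: Gauss-Jordan procedure: for $A\in M_{m,n}(\mathbb{R})$ set $A^{(0)}=A$. For $k\geq 0$, if $A^{(2k)}=[a^{(2k)}_{ij}]$ is defined and $a^{(2k)}_{k+1,k+1}\neq 0$, let $\mathcal{G}_{2k+1}$ be the $m\times m$ diagonal matrix with all diagonal entries $1$ except the $(k+1,k+1)$ entry, which is $1/a^{(2k)}_{k+1,k+1}$, and set $A^{(2k+1)}=\mathcal{G}_{2k+1}A^{(2k)}=[a^{(2k+1)}_{ij}]$; then let $\mathcal{G}_{2k+2}=[g_{ij}]_{m\times m}$ with $g_{ii}=1$, $g_{i,k+1}=-a^{(2k+1)}_{i,k+1}$ for $i\neq k+1$, and all other entries $0$, and set $A^{(2k+2)}=\mathcal{G}_{2k+2}A^{(2k+1)}$. The $\mathcal{G}_q$ are the Gauss-Jordan operation matrices. A matrix $A$ of rank $r\geq 1$ is diagonally eliminable up to $r$ if for each $k=1,\dots,r$ the matrix $A^{(2k-2)}$ is defined and $a^{(2k-2)}_{kk}\neq 0$. Minors: $m^{i_1\dots i_p}_{j_1\dots j_p}$ (increasing indices) is the determinant of the submatrix of $A$ with rows $i_1,\dots,i_p$ and columns $j_1,\dots,j_p$; $m^{1\dots k}_{1\dots i-1,\,i+1\dots k+1}$ uses rows $1,\dots,k$ and columns $1,\dots,k+1$ with $i$ removed. $m_k=m^{1\dots k}_{1\dots k}$ and $m_0=1$. *)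

(* Defs.v *)
From HB Require Import structures.
From mathcomp Require Import all_boot all_order all_algebra.
Set Implicit Arguments. Unset Strict Implicit. Unset Printing Implicit Defensive.
Import Order.TTheory GRing.Theory Num.Theory.
Local Open Scope ring_scope.

Section GaussJordan.
Variable R : realFieldType.

(* entry of a matrix at 0-based natural indices (0 outside the range) *)
Definition mxentry m n (A : 'M[R]_(m, n)) (i j : nat) : R :=
  match @insub _ (fun x => x < m)%N 'I_m i, @insub _ (fun x => x < n)%N 'I_n j with
  | Some i', Some j' => A i' j'
  | _, _ => 0
  end.

(* Minor with 1-based row indices rs and column indices cs (same length). *)
Definition minor m n (A : 'M[R]_(m, n)) (rs cs : seq nat) : R :=
  \det (\matrix_(i < size rs, j < size rs)
          mxentry A (nth 0%N rs i).-1 (nth 0%N cs j).-1).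

(* m_k = leading principal minor of order k (m_0 = 1) *)
Definition lead_minor m n (A : 'M[R]_(m, n)) (k : nat) : R :=
  minor A (iota 1 k) (iota 1 k).

(* Operation matrices of step k (0-based k; pivot position k+1 in 1-based
   terms).  G_{2k+1} built from B = A^(2k), G_{2k+2} built from B = A^(2k+1). *)
Definition Gop_odd m n (k : nat) (B : 'M[R]_(m, n)) : 'M[R]_m :=
  \matrix_(i, j) if i == j then (if (i == k :> nat) then (mxentry B k k)^-1 else 1)
                 else 0.

Definition Gop_even m n (k : nat) (B : 'M[R]_(m, n)) : 'M[R]_m :=
  \matrix_(i, j) if i == j then 1
                 else if (j == k :> nat) then - mxentry B i k else 0.

(* GJ_even A k = A^(2k) *)
Fixpoint GJ_even m n (A : 'M[R]_(m, n)) (k : nat) : 'M[R]_(m, n) :=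
  match k with
  | 0 => A
  | k'.+1 =>
      let B := Gop_odd k' (GJ_even A k') *m GJ_even A k' in
      Gop_even k' B *m B
  end.

Definition GJ_odd m n (A : 'M[R]_(m, n)) (k : nat) : 'M[R]_(m, n) :=
  Gop_odd k (GJ_even A k) *m GJ_even A k.

Definition GJ_G_odd m n (A : 'M[R]_(m, n)) (k : nat) : 'M[R]_m :=
  Gop_odd k (GJ_even A k).
Definition GJ_G_even m n (A : 'M[R]_(m, n)) (k : nat) : 'M[R]_m :=
  Gop_even k (GJ_odd A k).

(* diagonally eliminable up to r: for each k = 1..r, a^(2k-2)_{kk} <> 0
   (1-based), i.e. for each k < r, (A^(2k))_{k,k} <> 0 at 0-based index k. *)
Definition diag_elim_upto m n (A : 'M[R]_(m, n)) (r : nat) : Prop :=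
  forall k, (k < r)%N -> (k < m)%N /\ (k < n)%N /\ mxentry (GJ_even A k) k k != 0.

End GaussJordan.

(* Main.v *)
Require Import Defs.
From HB Require Import structures.
From mathcomp Require Import all_boot all_order all_algebra.
From mathcomp Require Import zify ring lra.
Import Order.TTheory GRing.Theory Num.Theory.
Local Open Scope ring_scope.

Set Implicit Arguments. Unset Strict Implicit.
Section Helpers.
Variable R : realFieldType.

Lemma mxentry_ord m n (A : 'M[R]_(m,n)) (i : 'I_m) (j : 'I_n) :
  mxentry A i j = A i j.
Proof. by rewrite /mxentry !valK. Qed.

Lemma minorE m n (A : 'M[R]_(m,n)) rs cs p : size rs = p ->
  minor A rs cs = \det (\matrix_(i < p, j < p)
      mxentry A (nth 0%N rs i).-1 (nth 0%N cs j).-1).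
Proof. by move=> e; rewrite /minor; case: p / e. Qed.

Lemma mulmx_colE m p n (X : 'M[R]_(m,p)) (Y : 'M[R]_(p,n)) i (j : 'I_n) (j' : 'I_p) :
  (forall l, Y l j = (l == j')%:R) -> (X *m Y) i j = X i j'.
Proof.
move=> H; rewrite mxE (bigD1 j') //= H eqxx mulr1 big1 ?addr0 //.
by move=> l /negbTE hl; rewrite H hl mulr0.
Qed.

Lemma mulmx_diagE m p n (X : 'M[R]_(m,p)) (Y : 'M[R]_(p,n)) i (i' : 'I_p) j :
  (forall l, l != i' -> X i l = 0) -> (X *m Y) i j = X i i' * Y i' j.
Proof.
move=> H; rewrite mxE (bigD1 i') //= big1 ?addr0 //.
by move=> l hl; rewrite H ?mul0r.
Qed.

Lemma mulmx_twoE m p n (X : 'M[R]_(m,p)) (Y : 'M[R]_(p,n)) i (a b : 'I_p) j :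
  a != b -> (forall l, l != a -> l != b -> X i l = 0) ->
  (X *m Y) i j = X i a * Y a j + X i b * Y b j.
Proof.
move=> hab H; rewrite mxE (bigD1 a) //= (bigD1 b) 1?eq_sym //= big1 ?addr0 //.
by move=> l /andP[hb ha]; rewrite H ?mul0r.
Qed.

Lemma restrict_mulmx m n p (E : 'M[R]_m) (A : 'M[R]_(m,n)) k
   (rr : 'I_p -> 'I_m) (cc : 'I_p -> 'I_n) :
  injective rr -> (forall l : 'I_m, (l < k)%N -> l \in [set rr x | x in setT]) ->
  (forall i j : 'I_m, (k <= j)%N -> E i j = (i == j)%:R) ->
  (\matrix_(a, b) E (rr a) (rr b)) *m (\matrix_(a, b) A (rr a) (cc b))
   = \matrix_(a, b) (E *m A) (rr a) (cc b).
Proof.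
move=> inj cov HE; apply/matrixP => a b; rewrite !mxE.
rewrite (bigID (fun l => l \in [set rr x | x in setT])) /=.
rewrite [X in _ = _ + X]big1 ?addr0; last first.
  move=> l Hl; rewrite HE; last first.
    by rewrite leqNgt; apply/negP => /cov; rewrite (negbTE Hl).
  have -> : (rr a == l) = false.
    by apply/negP => /eqP e; move: Hl; rewrite -e imset_f ?inE.
  by rewrite mul0r.
rewrite big_imset /=; last by move=> x y _ _; apply: inj.
by apply: eq_big => [q|q _]; rewrite ?inE ?mxE.
Qed.

Lemma det_lastrow p (M : 'M[R]_(p.+1)) :
  (forall q : 'I_p, M ord_max (widen_ord (leqnSn p) q) = 0) ->
  \det M = M ord_max ord_max *
     \det (\matrix_(a, b) M (widen_ord (leqnSn p) a) (widen_ord (leqnSn p) b)).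
Proof.
move=> H; rewrite (expand_det_row _ ord_max) big_ord_recr /= big1 ?add0r;
  last by move=> q _; rewrite H mul0r.
congr (_ * _); rewrite /cofactor /= addnn -signr_odd odd_double expr0 mul1r.
congr (\det _); apply/matrixP => a b; rewrite !mxE; congr (M _ _); apply: val_inj; by rewrite /= /bump leqNgt ltn_ord.
Qed.


Lemma GJ_struct m n (A : 'M[R]_(m,n)) k :
  (forall j, (j < k)%N -> (j < m)%N /\ (j < n)%N /\ mxentry (GJ_even A j) j j != 0) ->
  exists E : 'M[R]_m, GJ_even A k = E *m A /\
    (forall i j : 'I_m, (k <= j)%N -> E i j = (i == j)%:R) /\
    (forall (i : 'I_m) (j : 'I_n), (j < k)%N -> GJ_even A k i j = (i == j :> nat)%:R).
Proof.
elim: k => [|k IH] Hp.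
  exists 1%:M; split; first by rewrite mul1mx.
  by split=> // i j _; rewrite mxE.
have [E [HB [HE HBc]]] := IH (fun j hj => Hp j (ltnW hj)).
have [Hkm [Hkn Hpk]] := Hp k (ltnSn k).
set B := GJ_even A k in HB HBc Hpk *.
pose k0 : 'I_m := Ordinal Hkm; pose kn : 'I_n := Ordinal Hkn.
have HBkk : mxentry B k k = B k0 kn by exact: (mxentry_ord B k0 kn).
set Go := Gop_odd k B.
set C := Go *m B.
set Ge := Gop_even k C.
have -> : GJ_even A k.+1 = Ge *m C by [].
have HGo : forall i j : 'I_m, (j != k :> nat) -> Go i j = (i == j)%:R.
  move=> i j hj; rewrite /Go /Gop_odd mxE; case: (eqVneq i j) => [->|ne] //.
  by rewrite (negbTE hj).
have HGe : forall i j : 'I_m, (j != k :> nat) -> Ge i j = (i == j)%:R.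
  move=> i j hj; rewrite /Ge /Gop_even mxE; case: (eqVneq i j) => [_|ne] //.
  by rewrite (negbTE hj).
exists (Ge *m Go *m E); split; first by rewrite /C HB !mulmxA.
split.
  move=> i j hj.
  rewrite (@mulmx_colE _ _ _ _ _ _ _ j); last by move=> l; rewrite HE // ltnW.
  rewrite (@mulmx_colE _ _ _ _ _ _ _ j); last first.
    by move=> l; rewrite HGo //; apply/eqP => e; move: hj; rewrite e ltnn.
  by rewrite HGe //; apply/eqP => e; move: hj; rewrite e ltnn.
move=> i j; rewrite ltnS leq_eqVlt => /orP[/eqP ejk|hj].
  have ej : j = kn by apply: val_inj.
  rewrite ej.
  have HCk : forall l : 'I_m, C l kn = if l == k0 then 1 else B l kn.
    move=> l; rewrite /C (@mulmx_diagE _ _ _ _ _ _ l).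
      rewrite /Go /Gop_odd mxE eqxx; case: ifP => [/eqP hl|hl].
        have -> : l = k0 by apply: val_inj.
        by rewrite eqxx -HBkk mulVf.
      rewrite mul1r; case: eqP => // e; by move: hl; rewrite e eqxx.
    by move=> l' hl'; rewrite /Go /Gop_odd mxE eq_sym (negbTE hl').
  case: (eqVneq i k0) => [->|hik].
    rewrite (@mulmx_diagE _ _ _ _ _ _ k0).
      by rewrite /Ge /Gop_even mxE eqxx HCk eqxx mulr1 eqxx.
    move=> l hl; rewrite /Ge /Gop_even mxE eq_sym (negbTE hl).
    have -> : (l == k :> nat) = false.
      by apply/negP => /eqP e; move/negP: hl; apply; apply/eqP; exact: val_inj.
    by [].
  rewrite (@mulmx_twoE _ _ _ _ _ _ i k0) //.
    rewrite !HCk eqxx (negbTE hik).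
    have -> : Ge i k0 = - C i kn.
      rewrite /Ge /Gop_even mxE (negbTE hik) eqxx.
      by rewrite (mxentry_ord C i kn).
    have -> : Ge i i = 1 by rewrite /Ge /Gop_even mxE eqxx.
    have -> : (i == kn :> nat) = false.
      by apply/negP => /eqP e; move/negP: hik; apply; apply/eqP; exact: val_inj.
    rewrite HCk (negbTE hik).
    by rewrite mul1r mulr1 subrr.
  move=> l hli hlk; rewrite /Ge /Gop_even mxE eq_sym (negbTE hli).
  have -> : (l == k :> nat) = false.
    by apply/negP => /eqP e; move/negP: hlk; apply; apply/eqP; exact: val_inj.
  by [].
have hjm : (j < m)%N by apply: ltn_trans hj Hkm.
pose j' : 'I_m := Ordinal hjm.
have hj'k : (j' != k :> nat) by rewrite /= neq_ltn hj.
have HCj : forall l, C l j = (l == j')%:R.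
  move=> l; rewrite /C (@mulmx_colE _ _ _ _ _ _ _ j').
    by rewrite HGo.
  by move=> l'; rewrite HBc //.
rewrite (@mulmx_colE _ _ _ _ _ _ _ j') // HGe //.
Qed.


Section Claims.
Variables (m n : nat) (A : 'M[R]_(m,n)) (k : nat) (E : 'M[R]_m) (B : 'M[R]_(m,n)).
Hypotheses (Hk : (k <= m)%N) (Hkn : (k <= n)%N) (HB : B = E *m A)
  (HE : forall i j : 'I_m, (k <= j)%N -> E i j = (i == j)%:R)
  (HBc : forall (i : 'I_m) (j : 'I_n), (j < k)%N -> B i j = (i == j :> nat)%:R).

Let wm (a : 'I_k) : 'I_m := widen_ord Hk a.
Let wn (a : 'I_k) : 'I_n := widen_ord Hkn a.
Definition F11 := \matrix_(a, b) E (wm a) (wm b).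
Definition A11 := \matrix_(a, b) A (wm a) (wn b).

Lemma wm_cov (l : 'I_m) : (l < k)%N -> l \in [set wm x | x in setT].
Proof.
move=> hl; apply/imsetP; exists (Ordinal hl); first by rewrite inE.
exact: val_inj.
Qed.

Lemma wm_inj : injective wm.
Proof. by move=> a b /(congr1 val) /= e; apply: val_inj. Qed.

Lemma claimF : \det F11 * \det A11 = 1.
Proof.
rewrite -det_mulmx /F11 /A11.
rewrite (restrict_mulmx _ _ wm_inj wm_cov HE) -HB.
rewrite -(det1 R k); congr (\det _); apply/matrixP => a b.
by rewrite !mxE HBc //=.
Qed.

Lemma claimA (i : 'I_m) (j : 'I_n) : (k <= i)%N ->
  \det (\matrix_(a < k.+1, b < k.+1)
      A (insubd i (if (a < k)%N then (a : nat) else i))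
        (insubd j (if (b < k)%N then (b : nat) else j))) = \det A11 * B i j.
Proof.
move=> hki.
set rr := fun a : 'I_k.+1 => insubd i (if (a < k)%N then (a : nat) else i).
set cc := fun a : 'I_k.+1 => insubd j (if (a < k)%N then (a : nat) else j).
have Hrr : forall a, val (rr a) = if (a < k)%N then (a : nat) else i.
  move=> a; rewrite /rr val_insubd; case: (ltnP a k) => ha;
  [by rewrite (leq_trans ha Hk) | by rewrite if_same].
have Hcc : forall a, val (cc a) = if (a < k)%N then (a : nat) else j.
  move=> a; rewrite /cc val_insubd; case: (ltnP a k) => ha;
  [by rewrite (leq_trans ha Hkn) | by rewrite if_same].
have rr_inj : injective rr.
  move=> a b /(congr1 val); rewrite !Hrr => e; apply: val_inj.
  have := ltn_ord a; have := ltn_ord b.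
  by move: e; case: (ltnP a k) => ha; case: (ltnP b k) => hb /= e; lia.
have rr_cov : forall l : 'I_m, (l < k)%N -> l \in [set rr x | x in setT].
  move=> l hl; apply/imsetP; exists (Ordinal (ltn_trans hl (ltnSn k)));
    first by rewrite inE.
  by apply: val_inj; rewrite Hrr /= hl.
have HF := restrict_mulmx A cc rr_inj rr_cov HE.
rewrite -HB in HF.
move: (congr1 determinant HF); rewrite det_mulmx.
set F := \matrix_(a, b) E (rr a) (rr b).
set M := \matrix_(a, b) A (rr a) (cc b).
set N := \matrix_(a, b) B (rr a) (cc b).
have rrmax : rr ord_max = i by apply: val_inj; rewrite Hrr ltnn.
have ccmax : cc ord_max = j by apply: val_inj; rewrite Hcc ltnn.
have rrw : forall a : 'I_k, rr (widen_ord (leqnSn k) a) = wm a.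
  by move=> a; apply: val_inj; rewrite Hrr /= ltn_ord.
have ccw : forall a : 'I_k, val (cc (widen_ord (leqnSn k) a)) = a.
  by move=> a; rewrite Hcc /= ltn_ord.
have detN : \det N = B i j.
  rewrite det_lastrow.
    rewrite [N _ _]mxE rrmax ccmax -[RHS]mulr1; congr (_ * _).
    rewrite -(det1 R k); congr (\det _); apply/matrixP => a b.
    rewrite !mxE rrw HBc ccw //=.
  move=> q; rewrite mxE rrmax HBc ccw //.
  by have := leq_trans (ltn_ord q) hki; rewrite ltn_neqAle eq_sym => /andP[/negbTE -> _].
have detF : \det F = \det F11.
  rewrite -det_tr det_lastrow.
    rewrite [F^T _ _]mxE [F _ _]mxE rrmax HE // eqxx mul1r -det_tr.
    congr (\det _); apply/matrixP => a b.
    by rewrite !mxE !rrw.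
  move=> q; rewrite !mxE rrmax HE // rrw.
  have := leq_trans (ltn_ord q) hki; rewrite ltn_neqAle => /andP[hq _].
  by case: eqP => // e; move: hq; rewrite -e eqxx.
rewrite detN detF => H.
rewrite -H mulrA (mulrC (\det A11)) claimF mul1r.
by congr (\det _); apply/matrixP => a b; rewrite !mxE.
Qed.

Lemma claimB (i : 'I_m) (j : 'I_n) : (i < k)%N -> val j = k ->
  \det (\matrix_(a < k, b < k) A (wm a) (insubd j (bump i b)))
   = \det A11 * B i j * (-1) ^+ (i + k.-1).
Proof.
move=> hi hj.
set cb := fun b : 'I_k => insubd j (bump i b).
have Hcb : forall b, val (cb b) = bump i b.
  move=> b; rewrite /cb val_insubd.
  have h1 := ltn_ord j; have h2 := ltn_ord b; rewrite hj in h1.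
  by rewrite ifT // /bump; case: (i <= b)%N => /=; lia.
have HF := restrict_mulmx A cb wm_inj wm_cov HE.
rewrite -HB in HF.
move: (congr1 determinant HF); rewrite det_mulmx.
set M := \matrix_(a, b) A (wm a) (cb b).
set N := \matrix_(a, b) B (wm a) (cb b).
have hkl : (k.-1 < k)%N by rewrite ltn_predL (leq_ltn_trans (leq0n i) hi).
pose i' : 'I_k := Ordinal hi.
pose kl : 'I_k := Ordinal hkl.
have detN : \det N = B i j * (-1) ^+ (i + k.-1).
  rewrite (expand_det_row _ i') (bigD1 kl) //= big1 ?addr0.
    have -> : N i' kl = B i j.
      rewrite mxE; congr (B _ _); apply: val_inj => //.
      rewrite Hcb hj /= /bump; have hik : (i <= k.-1)%N by have := hi; lia.
      by rewrite hik; have := hi; lia.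
    rewrite /cofactor; congr (_ * _).
    rewrite -[RHS]mulr1; congr (_ * _).
    rewrite -(det1 R k.-1); congr (\det _); apply/matrixP => a b.
    have hcl : val (cb (lift kl b)) = val (lift i' b).
      rewrite Hcb /= /bump; have := ltn_ord b.
      by move=> hb; rewrite (leqNgt k.-1 b) hb.
    rewrite !mxE HBc; last by rewrite hcl; exact: ltn_ord.
    by rewrite hcl /= -(inj_eq (@lift_inj _ i')).
  move=> b hb; rewrite mxE HBc.
    by rewrite /= Hcb (negbTE (neq_bump _ _)) mul0r.
  rewrite Hcb /bump; have := ltn_ord b.
  have : (val b != k.-1) by apply: contra hb => /eqP e; apply/eqP; exact: val_inj.
  case: (i <= b)%N => /=; lia.
rewrite detN => H.
have hF := claimF; rewrite /F11 in hF.
rewrite -mulrA -H mulrA (mulrC (\det A11)) hF mul1r.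
by congr (\det _); apply/matrixP => a b; rewrite !mxE.
Qed.

End Claims.

Lemma sign_aux (k i : nat) : (i < k)%N ->
  (-1) ^+ (k + i.+1 + 1) * (-1) ^+ (i + k.-1) = - 1 :> R.
Proof.
move=> hi.
have e : (k + i.+1 + 1 + (i + k.-1) = (i + k.-1).*2.+3)%N.
  rewrite -addnn; lia.
rewrite -exprD e !exprS -signr_odd odd_double /= expr0.
by rewrite mulr1 !mulN1r opprK.
Qed.

End Helpers.

Theorem theorem2p7 (R : realFieldType) (m n : nat) (A : 'M[R]_(m, n)) (r k : nat) :
  \rank A = r -> (1 < r)%N -> diag_elim_upto A r -> (k < r)%N ->
  (* G_{2k+1} *)
  ((forall i j : 'I_m, i != j -> GJ_G_odd A k i j = 0) /\
   (forall i : 'I_m, (i.+1 != k.+1)%N -> GJ_G_odd A k i i = 1) /\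
   (forall i : 'I_m, (i.+1 = k.+1)%N ->
      GJ_G_odd A k i i = lead_minor A k / lead_minor A k.+1)) /\
  (* G_{2k+2} *)
  ((forall i j : 'I_m, (j.+1 != i.+1)%N -> (j.+1 != k.+1)%N -> GJ_G_even A k i j = 0) /\
   (forall i : 'I_m, GJ_G_even A k i i = 1) /\
   (forall i j : 'I_m, (1 <= i.+1 <= k)%N -> (j.+1 = k.+1)%N ->
      GJ_G_even A k i j =
        (-1) ^+ (k + i.+1 + 1)
        * minor A (iota 1 k) (iota 1 (i.+1 - 1) ++ iota (i.+1 + 1) (k.+1 - i.+1))
        / lead_minor A k) /\
   (forall i j : 'I_m, (k.+1 < i.+1 <= m)%N -> (j.+1 = k.+1)%N ->
      GJ_G_even A k i j =
        - minor A (rcons (iota 1 k) i.+1) (iota 1 k.+1) / lead_minor A k)).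
Proof.
move=> _ _ Hde Hkr.
have [Hkm [Hkn Hp]] := Hde k Hkr.
have [E [HB [HE HBc]]] := GJ_struct (fun j hj => Hde j (ltn_trans hj Hkr)).
set B := GJ_even A k in HB HBc Hp.
have Hk := ltnW Hkm; have Hkn' := ltnW Hkn.
pose k0 : 'I_m := Ordinal Hkm; pose kn : 'I_n := Ordinal Hkn.
have HBkk : mxentry B k k = B k0 kn := mxentry_ord B k0 kn.
have hF := claimF Hk Hkn' HB HE HBc.
set D := \det (A11 A Hk Hkn') in hF.
have HD : D != 0 by apply/eqP => e; move: hF; rewrite e mulr0 => /eqP; rewrite eq_sym oner_eq0.
have Hlead : lead_minor A k = D.
  rewrite /lead_minor (minorE _ _ (size_iota 1 k)) /D; congr (\det _).
  apply/matrixP => a b; rewrite !mxE !nth_iota // add1n /=.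
  exact: (mxentry_ord A (widen_ord Hk a) (widen_ord Hkn' b)).
have HGe : forall i j : 'I_m, (i != k :> nat) -> (j = k :> nat) ->
    GJ_G_even A k i j = - B i kn.
  move=> i j hik hjk; rewrite /GJ_G_even /Gop_even mxE.
  have -> : (i == j) = false.
    by apply/negP => /eqP e; move: hik; rewrite e hjk eqxx.
  rewrite hjk eqxx; congr (- _).
  rewrite (mxentry_ord (GJ_odd A k) i kn) /GJ_odd -/B.
  rewrite (@mulmx_diagE _ _ _ _ _ _ _ i).
    by rewrite mxE eqxx (negbTE hik) mul1r.
  by move=> l hl; rewrite mxE eq_sym (negbTE hl).
have valA : forall (i : 'I_m) (a : 'I_k.+1), (k <= i)%N ->
    val (insubd i (if (a < k)%N then (a : nat) else i)) = if (a < k)%N then (a : nat) else i.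
  move=> i a hki; rewrite val_insubd; case: (ltnP a k) => ha;
  [by rewrite (leq_trans ha Hk) | by rewrite if_same].
have valN : forall (a : 'I_k.+1),
    val (insubd kn (if (a < k)%N then (a : nat) else kn)) = a.
  move=> a; rewrite val_insubd /=; have := ltn_ord a; case: (ltnP a k) => ha ha'.
    by rewrite (leq_trans ha Hkn').
  by rewrite Hkn; lia.
split.
  split.
    by move=> i j hij; rewrite /GJ_G_odd /Gop_odd mxE (negbTE hij).
  split.
    move=> i hik; rewrite eqSS in hik.
    by rewrite /GJ_G_odd /Gop_odd mxE eqxx (negbTE hik).
  move=> i [hik]; rewrite /GJ_G_odd /Gop_odd mxE eqxx hik eqxx -/B HBkk.
  have H1 := claimA Hk Hkn' HB HE HBc kn (leqnn k : (k <= k0)%N).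
  have -> : lead_minor A k.+1 = D * B k0 kn.
    rewrite -H1 /lead_minor (minorE _ _ (size_iota 1 k.+1)); congr (\det _).
    apply/matrixP => a b; rewrite !mxE !nth_iota // add1n /= -mxentry_ord.
    congr (mxentry A _ _); last by rewrite add0n (valN b).
    rewrite (valA k0 a (leqnn k)); have := ltn_ord a; case: (ltnP a k) => //= ha ha'; rewrite /k0 /=; lia.
  have HBk : B k0 kn != 0 by rewrite -HBkk.
  by rewrite Hlead invfM mulrA divff // mul1r.
split.
  move=> i j hji hjk; rewrite /GJ_G_even /Gop_even mxE.
  rewrite eqSS in hji; rewrite eqSS in hjk.
  have -> : (i == j) = false by apply/negP => /eqP e; move: hji; rewrite e eqxx.
  by rewrite (negbTE hjk).
split.
  by move=> i; rewrite /GJ_G_even /Gop_even mxE eqxx.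
split.
  move=> i j /andP[_ hik] [hjk].
  have hik' : (i != k :> nat) by rewrite neq_ltn hik.
  rewrite HGe // Hlead.
  have H1 := claimB Hk Hkn' HB HE HBc (hik : (i < k)%N) (erefl : val kn = k).
  have -> : minor A (iota 1 k) (iota 1 (i.+1 - 1) ++ iota (i.+1 + 1) (k.+1 - i.+1))
      = D * B i kn * (-1) ^+ (i + k.-1).
    rewrite -H1 (minorE _ _ (size_iota 1 k)); congr (\det _).
    apply/matrixP => a b; rewrite !mxE nth_iota // add1n /= -mxentry_ord.
    congr (mxentry A _ _).
    have hb := ltn_ord b.
    rewrite val_insubd /bump.
    have -> : ((i <= b)%N + b < n)%N by case: (i <= b)%N => /=; lia.
    rewrite nth_cat size_iota subn1 /=.
    case: (ltnP b i) => hbi.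
      by rewrite nth_iota // (leqNgt i b) hbi /=; lia.
    rewrite nth_iota; last by lia.
    by rewrite /=; lia.
  have hs := sign_aux R hik.
  set s1 := (-1) ^+ (k + i.+1 + 1) in hs *; set s2 := (-1) ^+ (i + k.-1) in hs *.
  have -> : s1 * (D * B i kn * s2) / D = (s1 * s2) * B i kn * (D / D) by ring.
  by rewrite hs divff // mulr1 mulN1r.
move=> i j /andP[hki _] [hjk].
have hki' : (k <= i)%N by move: hki; lia.
have hik' : (i != k :> nat) by move: hki; lia.
rewrite HGe // Hlead.
have H1 := claimA Hk Hkn' HB HE HBc kn hki'.
have -> : minor A (rcons (iota 1 k) i.+1) (iota 1 k.+1) = D * B i kn.
  rewrite -H1 (minorE _ _ (_ : size (rcons (iota 1 k) i.+1) = k.+1)); last first.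
    by rewrite size_rcons size_iota.
  congr (\det _).
  apply/matrixP => a b; rewrite !mxE nth_iota // add1n /= -mxentry_ord.
  rewrite valA // valN nth_rcons size_iota.
  have := ltn_ord a; case: (ltnP a k) => ha ha'.
    by rewrite nth_iota.
  by have -> : (a == k :> nat) by rewrite eqn_leq ha; lia.
have -> : - (D * B i kn) / D = - B i kn * (D / D) by ring.
by rewrite divff // mulr1.
Qed.
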